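(* Let $\nu\in\mathbb C$. Then $J_\nu(\cdot;q^2)$ and $J_{\nu+1}(\cdot;q^2)$ have no common zero in $\mathbb C\setminus\{0\}$.
   Context: Fix $0<q<1$. For $a\in\mathbb C$ put $(a;q)_0=1$, $(a;q)_k=\prod_{i=0}^{k-1}(1-aq^i)$, $(a;q)_\infty=\prod_{i\ge0}(1-aq^i)$. For $\nu\in\mathbb C$ and $x\in\mathbb C\setminus\{0\}$ the Hahn–Exton $q$-Bessel function is $$J_\nu(x;q^2)=\frac{x^\nu}{(q^2;q^2)_\infty}\sum_{k=0}^\infty\frac{(-1)^kq^{k(k+1)}(q^{2\nu+2k+2};q^2)_\infty}{(q^2;q^2)_k}\,x^{2k},$$ with $x^\nu=\exp(\nu\operatorname{Log}x)$ (principal branch). *)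

(* Defs.v *)
From Stdlib Require Import Reals.
From Coquelicot Require Import Coquelicot.
Open Scope R_scope.

Definition cexp (z : C) : C :=
  (exp (Re z) * cos (Im z), exp (Re z) * sin (Im z)).

(* principal argument, in (-PI, PI] (value at 0 irrelevant) *)
Definition carg (z : C) : R :=
  if Rle_dec 0 (Im z) then acos (Re z / Cmod z) else - acos (Re z / Cmod z).

Definition clog (z : C) : C := (ln (Cmod z), carg z).

Definition cpow (x nu : C) : C := cexp (Cmult nu (clog x)).

Fixpoint qpoch (a : C) (b : R) (n : nat) : C :=
  match n with
  | O => RtoC 1
  | S k => Cmult (qpoch a b k) (Cminus (RtoC 1) (Cmult a (RtoC (b ^ k))))
  end.

Definition clim (u : nat -> C) : C :=
  (real (Lim_seq (fun n => Re (u n))), real (Lim_seq (fun n => Im (u n)))).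

Definition qpoch_inf (a : C) (b : R) : C := clim (qpoch a b).

Definition cseries (u : nat -> C) : C :=
  (Series (fun n => Re (u n)), Series (fun n => Im (u n))).

Definition hahn_exton_J (q : R) (nu x : C) : C :=
  Cmult (Cdiv (cpow x nu) (qpoch_inf (RtoC (q ^ 2)) (q ^ 2)))
    (cseries (fun k =>
       Cmult
         (Cdiv
            (Cmult (RtoC ((-1) ^ k * q ^ (k * (k + 1))))
               (qpoch_inf
                  (cexp (Cmult (Cplus (Cmult (RtoC 2) nu) (RtoC (INR (2 * k + 2))))
                               (RtoC (ln q))))
                  (q ^ 2)))
            (qpoch (RtoC (q ^ 2)) (q ^ 2) k))
         (Cpow x (2 * k)))).

(* Main.v *)
Require Import Defs.
From Stdlib Require Import Reals Lra Lia Psatz FunctionalExtensionality.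
From Coquelicot Require Import Coquelicot.
Open Scope R_scope.

Definition cser (u : nat -> C) (L : C) :=
  is_series (fun n => Re (u n)) (Re L) /\ is_series (fun n => Im (u n)) (Im L).

Lemma rser_lin (a b : nat -> R) la lb al be :
  is_series a la -> is_series b lb ->
  is_series (fun n => al * a n + be * b n) (al * la + be * lb).
Proof.
  intros Ha Hb.
  apply (is_series_plus _ _ _ _ (is_series_scal al _ _ Ha) (is_series_scal be _ _ Hb)).
Qed.

Lemma cser_unique u L : cser u L -> cseries u = L.
Proof.
  intros [H1 H2]; unfold cseries; destruct L as [l1 l2].
  rewrite (is_series_unique _ _ H1), (is_series_unique _ _ H2); reflexivity.
Qed.

Lemma cser_ext u v L : (forall n, u n = v n) -> cser u L -> cser v L.
Proof.
  intros E [H1 H2]; split; eapply is_series_ext; try eassumption;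
  intros n; simpl; rewrite E; reflexivity.
Qed.

Lemma cser_lin u v L M (c d : C) : cser u L -> cser v M ->
  cser (fun n => Cplus (Cmult c (u n)) (Cmult d (v n))) (Cplus (Cmult c L) (Cmult d M)).
Proof.
  intros [H1 H2] [H3 H4].
  pose proof (rser_lin _ _ _ _ (Re c) (- Im c) H1 H2) as A1.
  pose proof (rser_lin _ _ _ _ (Re d) (- Im d) H3 H4) as A2.
  pose proof (rser_lin _ _ _ _ 1 1 A1 A2) as A3.
  pose proof (rser_lin _ _ _ _ (Re c) (Im c) H2 H1) as B1.
  pose proof (rser_lin _ _ _ _ (Re d) (Im d) H4 H3) as B2.
  pose proof (rser_lin _ _ _ _ 1 1 B1 B2) as B3.
  split.
  - eapply is_series_ext; [|replace (Re _) with (1 * (Re c * Re L + - Im c * Im L) + 1 * (Re d * Re M + - Im d * Im M)); [exact A3|]].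
    + intros n; unfold Re, Im, Cplus, Cmult; simpl; ring.
    + unfold Re, Im, Cplus, Cmult; simpl; ring.
  - eapply is_series_ext; [|replace (Im _) with (1 * (Re c * Im L + Im c * Re L) + 1 * (Re d * Im M + Im d * Re M)); [exact B3|]].
    + intros n; unfold Re, Im, Cplus, Cmult; simpl; ring.
    + unfold Re, Im, Cplus, Cmult; simpl; ring.
Qed.

Lemma rser_S a l : is_series a l -> is_series (fun k => a (S k)) (l - a 0%nat).
Proof.
  intros H; apply is_series_incr_1.
  match goal with |- is_series _ ?X => replace X with l; [exact H|] end. assert (HH : forall x y : R, x = x - y + y) by (intros; ring); apply HH.
Qed.

Lemma rser_S' a l : is_series (fun k => a (S k)) l -> is_series a (a 0%nat + l).
Proof.
  intros H; apply is_series_decr_1.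
  match goal with |- is_series _ ?X => replace X with l; [exact H|] end. assert (HH : forall x y : R, x = y + x + - y) by (intros; ring); apply HH.
Qed.

Lemma cser_S u L : cser u L -> cser (fun k => u (S k)) (Cminus L (u 0%nat)).
Proof.
  intros [H1 H2]; split.
  - pose proof (rser_S _ _ H1) as H; unfold Cminus, Cplus, Copp; simpl; exact H.
  - pose proof (rser_S _ _ H2) as H; unfold Cminus, Cplus, Copp; simpl; exact H.
Qed.

Lemma cser_S' u L : cser (fun k => u (S k)) L -> cser u (Cplus (u 0%nat) L).
Proof.
  intros [H1 H2]; split.
  - pose proof (rser_S' (fun n => Re (u n)) _ H1) as H; unfold Cplus; simpl; exact H.
  - pose proof (rser_S' (fun n => Im (u n)) _ H2) as H; unfold Cplus; simpl; exact H.
Qed.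

Lemma im_le_Cmod c : Rabs (Im c) <= Cmod c.
Proof.
  pose proof (Rmax_Cmod c). pose proof (Rmax_r (Rabs (fst c)) (Rabs (snd c))). unfold Im; lra.
Qed.

Lemma cser_abs u : ex_series (fun n => Cmod (u n)) -> cser u (cseries u).
Proof.
  intros H; split; simpl; apply Series_correct.
  - apply (ex_series_le (fun n => Re (u n)) (fun n => Cmod (u n))); [intros n; apply re_le_Cmod | exact H].
  - apply (ex_series_le (fun n => Im (u n)) (fun n => Cmod (u n))); [intros n; apply im_le_Cmod | exact H].
Qed.

Lemma Cmod_le_parts z : Cmod z <= 2 * (Rabs (Re z) + Rabs (Im z)).
Proof.
  pose proof (Cmod_2Rmax z).
  assert (sqrt 2 <= 2).
  { rewrite <- (sqrt_square 2) at 2 by lra. apply sqrt_le_1_alt; lra. }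
  unfold Rmax in H; destruct Rle_dec; unfold Re, Im;
  pose proof (Rabs_pos (fst z)); pose proof (Rabs_pos (snd z));
  pose proof (sqrt_pos 2); nra.
Qed.

Lemma cseries_bound u : ex_series (fun n => Cmod (u n)) ->
  Cmod (cseries u) <= 4 * Series (fun n => Cmod (u n)).
Proof.
  intros H. pose proof (Cmod_le_parts (cseries u)).
  unfold cseries in *; simpl in *.
  assert (E1 : ex_series (fun n => Rabs (Re (u n)))).
  { apply (ex_series_le (fun n => Rabs (Re (u n))) (fun n => Cmod (u n))); [intros n; change (Rabs (Rabs (Re (u n))) <= Cmod (u n)); rewrite Rabs_Rabsolu; apply re_le_Cmod | exact H]. }
  assert (E2 : ex_series (fun n => Rabs (Im (u n)))).
  { apply (ex_series_le (fun n => Rabs (Im (u n))) (fun n => Cmod (u n))); [intros n; change (Rabs (Rabs (Im (u n))) <= Cmod (u n)); rewrite Rabs_Rabsolu; apply im_le_Cmod | exact H]. }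
  pose proof (Series_Rabs _ E1). pose proof (Series_Rabs _ E2).
  assert (Series (fun n => Rabs (Re (u n))) <= Series (fun n => Cmod (u n))).
  { apply Series_le; auto. intros n; split; [apply Rabs_pos| apply re_le_Cmod]. }
  assert (Series (fun n => Rabs (Im (u n))) <= Series (fun n => Cmod (u n))).
  { apply Series_le; auto. intros n; split; [apply Rabs_pos| apply im_le_Cmod]. }
  lra.
Qed.
Definition ccv (u : nat -> C) (l : C) :=
  is_lim_seq (fun n => Re (u n)) (Re l) /\ is_lim_seq (fun n => Im (u n)) (Im l).

Lemma ccv_clim u l : ccv u l -> clim u = l.
Proof.
  intros [H1 H2]; unfold clim.
  rewrite (is_lim_seq_unique _ _ H1), (is_lim_seq_unique _ _ H2); destruct l; reflexivity.
Qed.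

Lemma ccv_ext u v l : (forall n, u n = v n) -> ccv u l -> ccv v l.
Proof.
  intros E [H1 H2]; split.
  - apply (is_lim_seq_ext (fun n => Re (u n))); [intros n; rewrite E; reflexivity|exact H1].
  - apply (is_lim_seq_ext (fun n => Im (u n))); [intros n; rewrite E; reflexivity|exact H2].
Qed.

Lemma ccv_S u l : ccv (fun n => u (S n)) l -> ccv u l.
Proof.
  intros [H1 H2]; split; apply is_lim_seq_incr_1; assumption.
Qed.

Lemma ccv_scal u l c : ccv u l -> ccv (fun n => Cmult c (u n)) (Cmult c l).
Proof.
  intros [H1 H2]; split.
  - pose proof (is_lim_seq_minus' _ _ _ _ (is_lim_seq_scal_l _ (Re c) _ H1) (is_lim_seq_scal_l _ (Im c) _ H2)) as H.
    unfold Re, Im, Cmult in *; simpl in *; exact H.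
  - pose proof (is_lim_seq_plus' _ _ _ _ (is_lim_seq_scal_l _ (Re c) _ H2) (is_lim_seq_scal_l _ (Im c) _ H1)) as H.
    unfold Re, Im, Cmult in *; simpl in *; exact H.
Qed.

Lemma ccv_sq u l : ccv u l -> is_lim_seq (fun n => Cmod (u n) ^ 2) (Cmod l ^ 2).
Proof.
  intros [H1 H2].
  pose proof (is_lim_seq_plus' _ _ _ _ (is_lim_seq_mult' _ _ _ _ H1 H1) (is_lim_seq_mult' _ _ _ _ H2 H2)) as H.
  replace (Cmod l ^ 2) with (Re l * Re l + Im l * Im l).
  - eapply is_lim_seq_ext; [|exact H]. intros n; simpl. pose proof (Cmod2_alt (u n)). simpl in H0. lra.
  - pose proof (Cmod2_alt l). simpl in H0. lra.
Qed.

Lemma ccv_bound u l M : ccv u l -> (forall n, Cmod (u n) <= M) -> Cmod l <= M.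
Proof.
  intros H B. pose proof (ccv_sq _ _ H) as H2.
  assert (0 <= M) by (pose proof (Cmod_ge_0 (u 0%nat)); pose proof (B 0%nat); lra).
  assert (Rbar_le (Cmod l ^ 2) (M ^ 2)).
  { apply (is_lim_seq_le (fun n => Cmod (u n) ^ 2) (fun _ => M ^ 2) _ _); [|exact H2|apply is_lim_seq_const].
    intros n; pose proof (B n); pose proof (Cmod_ge_0 (u n)); nra. }
  simpl in H1. pose proof (Cmod_ge_0 l). nra.
Qed.

Lemma ccv_lbound u l m : ccv u l -> 0 <= m -> (forall n, m <= Cmod (u n)) -> m <= Cmod l.
Proof.
  intros H Hm B. pose proof (ccv_sq _ _ H) as H2.
  assert (Rbar_le (m ^ 2) (Cmod l ^ 2)).
  { apply (is_lim_seq_le (fun _ => m ^ 2) (fun n => Cmod (u n) ^ 2) _ _); [|apply is_lim_seq_const|exact H2].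
    intros n; pose proof (B n); nra. }
  simpl in H0. pose proof (Cmod_ge_0 l). nra.
Qed.

Lemma pow_le_one b n : 0 <= b <= 1 -> b ^ n <= 1.
Proof.
  intros Hb; induction n; simpl; [lra|]. pose proof (pow_le b n (proj1 Hb)); nra.
Qed.

Lemma Cmod_1m_le w : Cmod (Cminus (RtoC 1) w) <= 1 + Cmod w.
Proof.
  unfold Cminus. pose proof (Cmod_triangle (RtoC 1) (Copp w)). rewrite Cmod_opp, Cmod_1 in H. exact H.
Qed.

Lemma Cmod_1m_ge w : 1 - Cmod w <= Cmod (Cminus (RtoC 1) w).
Proof.
  pose proof (Cmod_triangle (Cminus (RtoC 1) w) w).
  replace (Cplus (Cminus (RtoC 1) w) w) with (RtoC 1) in H by ring.
  rewrite Cmod_1 in H. lra.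
Qed.

Lemma Cmod_ab a b n : 0 <= b -> Cmod (Cmult a (RtoC (b ^ n))) = Cmod a * b ^ n.
Proof.
  intros Hb; rewrite Cmod_mult, Cmod_R, Rabs_right; [reflexivity|]. apply Rle_ge, pow_le; lra.
Qed.

Lemma qpoch_ub a b n : 0 <= b < 1 ->
  Cmod (qpoch a b n) <= exp (Cmod a * (1 - b ^ n) / (1 - b)).
Proof.
  intros Hb; induction n.
  - simpl. rewrite Cmod_1. replace (Cmod a * (1 - 1) / (1 - b)) with 0 by (field; lra). rewrite exp_0; lra.
  - simpl qpoch. rewrite Cmod_mult.
    pose proof (Cmod_1m_le (Cmult a (RtoC (b ^ n)))) as H1. rewrite Cmod_ab in H1 by lra.
    pose proof (exp_ineq1_le (Cmod a * b ^ n)).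
    replace (Cmod a * (1 - b ^ S n) / (1 - b)) with (Cmod a * (1 - b ^ n) / (1 - b) + Cmod a * b ^ n)
      by (simpl; field; lra).
    rewrite exp_plus.
    pose proof (Cmod_ge_0 (qpoch a b n)). pose proof (Cmod_ge_0 (Cminus (RtoC 1) (Cmult a (RtoC (b ^ n))))).
    pose proof (exp_pos (Cmod a * (1 - b ^ n) / (1 - b))).
    apply Rle_trans with (Cmod (qpoch a b n) * (1 + Cmod a * b ^ n)); [apply Rmult_le_compat_l; lra|].
    pose proof (Cmod_ge_0 a); pose proof (pow_le b n (proj1 Hb)). apply Rmult_le_compat; try lra; nra.
Qed.

Lemma exp_mono x y : x <= y -> exp x <= exp y.
Proof. intros [H|H]; [left; apply exp_increasing; exact H| rewrite H; lra]. Qed.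

Lemma qpoch_ub2 a b n : 0 <= b < 1 -> Cmod (qpoch a b n) <= exp (Cmod a / (1 - b)).
Proof.
  intros Hb. eapply Rle_trans; [apply qpoch_ub; auto|]. apply exp_mono.
  pose proof (Cmod_ge_0 a); pose proof (pow_le b n (proj1 Hb)).
  unfold Rdiv. apply Rmult_le_compat_r; [left; apply Rinv_0_lt_compat; lra|]. nra.
Qed.

Lemma qpoch_lb a b n : 0 <= b < 1 -> Cmod a <= (1 - b) / 2 ->
  1 - Cmod a * (1 - b ^ n) / (1 - b) <= Cmod (qpoch a b n).
Proof.
  intros Hb Ha; induction n.
  - simpl. rewrite Cmod_1. replace (Cmod a * (1 - 1) / (1 - b)) with 0 by (field; lra). lra.
  - simpl qpoch. rewrite Cmod_mult.
    pose proof (Cmod_1m_ge (Cmult a (RtoC (b ^ n)))) as H1. rewrite Cmod_ab in H1 by lra.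
    replace (Cmod a * (1 - b ^ S n) / (1 - b)) with (Cmod a * (1 - b ^ n) / (1 - b) + Cmod a * b ^ n)
      by (simpl; field; lra).
    pose proof (Cmod_ge_0 a); pose proof (pow_le b n (proj1 Hb)); pose proof (pow_le_one b n ltac:(lra)).
    assert (Cmod a * b ^ n <= 1/2).
    { assert (Cmod a <= 1/2) by lra. nra. }
    assert (0 <= Cmod a * (1 - b ^ n) / (1 - b)).
    { apply Rmult_le_pos; [nra| left; apply Rinv_0_lt_compat; lra]. }
    apply Rle_trans with (Cmod (qpoch a b n) * (1 - Cmod a * b ^ n)); [|apply Rmult_le_compat_l; [apply Cmod_ge_0|lra]].
    assert (0 <= 1 - Cmod a * b ^ n) by lra.
    pose proof (Rmult_le_compat_r _ _ _ H5 IHn). apply Rle_trans with ((1 - Cmod a * (1 - b ^ n) / (1 - b)) * (1 - Cmod a * b ^ n)); [|exact H6]. assert (0 <= Cmod a * (1 - b ^ n) / (1 - b) * (Cmod a * b ^ n)) by (apply Rmult_le_pos; nra). nra.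
Qed.

Lemma qpoch_lb2 a b n : 0 <= b < 1 -> Cmod a <= (1 - b) / 2 -> 1/2 <= Cmod (qpoch a b n).
Proof.
  intros Hb Ha. eapply Rle_trans; [|apply qpoch_lb; auto].
  pose proof (Cmod_ge_0 a); pose proof (pow_le b n (proj1 Hb)).
  assert (Cmod a * (1 - b ^ n) / (1 - b) <= 1/2); [|lra].
  apply Rmult_le_reg_r with (1 - b); [lra|]. unfold Rdiv. rewrite Rmult_assoc, Rinv_l by lra. nra.
Qed.

Lemma sum_tele (f : nat -> R) n : sum_n (fun k => f (S k) - f k) n = f (S n) - f 0%nat.
Proof.
  induction n.
  - rewrite sum_O; reflexivity.
  - rewrite sum_Sn, IHn. unfold plus; simpl. ring.
Qed.

Lemma qpoch_cv a b : 0 <= b < 1 -> exists l, ccv (qpoch a b) l.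
Proof.
  intros Hb.
  set (E := exp (Cmod a / (1 - b))).
  set (d := fun n => Cminus (qpoch a b (S n)) (qpoch a b n)).
  assert (Hd : forall n, Cmod (d n) <= E * Cmod a * b ^ n).
  { intros n. unfold d. simpl qpoch.
    replace (Cminus (Cmult (qpoch a b n) (Cminus (RtoC 1) (Cmult a (RtoC (b ^ n))))) (qpoch a b n))
      with (Copp (Cmult (qpoch a b n) (Cmult a (RtoC (b ^ n))))) by ring.
    rewrite Cmod_opp, Cmod_mult, Cmod_ab by lra.
    pose proof (qpoch_ub2 a b n Hb). pose proof (Cmod_ge_0 a); pose proof (pow_le b n (proj1 Hb)).
    fold E in H. rewrite <- Rmult_assoc. apply Rmult_le_compat_r; [lra|]. apply Rmult_le_compat_r; lra. }
  assert (Hs : ex_series (fun n => Cmod (d n))).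
  { apply (ex_series_le (fun n => Cmod (d n)) (fun n => E * Cmod a * b ^ n)).
    - intros n. change (Rabs (Cmod (d n)) <= E * Cmod a * b ^ n). rewrite Rabs_right by (apply Rle_ge, Cmod_ge_0). apply Hd.
    - apply (ex_series_scal_l (E * Cmod a) (fun n => b ^ n)). apply ex_series_geom. rewrite Rabs_right; lra. }
  destruct (cser_abs _ Hs) as [H1 H2].
  exists (Cplus (cseries d) (RtoC 1)). apply ccv_S. split.
  - assert (T := sum_tele (fun k => Re (qpoch a b k))).
    apply (is_lim_seq_ext (fun n => sum_n (fun k => Re (d k)) n + 1)).
    + intros n. replace (sum_n (fun k => Re (d k)) n) with (sum_n (fun k => Re (qpoch a b (S k)) - Re (qpoch a b k)) n).
      * rewrite T. simpl. lra.
      * apply sum_n_ext; intros k; unfold d; simpl; reflexivity.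
    + replace (Re (Cplus (cseries d) (RtoC 1))) with (Re (cseries d) + 1) by (simpl; lra).
      apply is_lim_seq_plus'; [exact H1| apply is_lim_seq_const].
  - assert (T := sum_tele (fun k => Im (qpoch a b k))).
    apply (is_lim_seq_ext (fun n => sum_n (fun k => Im (d k)) n + 0)).
    + intros n. replace (sum_n (fun k => Im (d k)) n) with (sum_n (fun k => Im (qpoch a b (S k)) - Im (qpoch a b k)) n).
      * rewrite T. simpl. lra.
      * apply sum_n_ext; intros k; unfold d; simpl; reflexivity.
    + replace (Im (Cplus (cseries d) (RtoC 1))) with (Im (cseries d) + 0) by (simpl; lra).
      apply is_lim_seq_plus'; [exact H2| apply is_lim_seq_const].
Qed.

Lemma qpoch_shift a b n :
  qpoch a b (S n) = Cmult (Cminus (RtoC 1) a) (qpoch (Cmult a (RtoC b)) b n).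
Proof.
  revert a; induction n; intros a.
  - simpl. ring.
  - change (qpoch a b (S (S n))) with (Cmult (qpoch a b (S n)) (Cminus (RtoC 1) (Cmult a (RtoC (b ^ S n))))).
    rewrite IHn. simpl qpoch. simpl pow. rewrite RtoC_mult. ring.
Qed.

Lemma qpinf_rec a b : 0 <= b < 1 ->
  qpoch_inf a b = Cmult (Cminus (RtoC 1) a) (qpoch_inf (Cmult a (RtoC b)) b).
Proof.
  intros Hb. destruct (qpoch_cv (Cmult a (RtoC b)) b Hb) as [l Hl].
  unfold qpoch_inf. rewrite (ccv_clim _ _ Hl).
  apply ccv_clim. apply ccv_S.
  apply (ccv_ext (fun n => Cmult (Cminus (RtoC 1) a) (qpoch (Cmult a (RtoC b)) b n))).
  - intros n; rewrite qpoch_shift; reflexivity.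
  - apply ccv_scal; exact Hl.
Qed.

Lemma qpinf_iter a b N : 0 <= b < 1 ->
  qpoch_inf a b = Cmult (qpoch a b N) (qpoch_inf (Cmult a (RtoC (b ^ N))) b).
Proof.
  intros Hb; induction N.
  - simpl. replace (Cmult a (RtoC 1)) with a by ring. ring.
  - rewrite IHN, (qpinf_rec (Cmult a (RtoC (b ^ N)))) by exact Hb.
    simpl qpoch. simpl pow. rewrite (RtoC_mult b (b ^ N)).
    replace (Cmult (Cmult a (RtoC (b ^ N))) (RtoC b)) with (Cmult a (Cmult (RtoC b) (RtoC (b ^ N)))) by ring.
    ring.
Qed.

Lemma qpinf_ub a b : 0 <= b < 1 -> Cmod (qpoch_inf a b) <= exp (Cmod a / (1 - b)).
Proof.
  intros Hb. destruct (qpoch_cv a b Hb) as [l Hl]. unfold qpoch_inf. rewrite (ccv_clim _ _ Hl).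
  apply (ccv_bound _ _ _ Hl). intros n; apply qpoch_ub2; auto.
Qed.

Lemma qpinf_lb a b : 0 <= b < 1 -> Cmod a <= (1 - b) / 2 -> 1/2 <= Cmod (qpoch_inf a b).
Proof.
  intros Hb Ha. destruct (qpoch_cv a b Hb) as [l Hl]. unfold qpoch_inf. rewrite (ccv_clim _ _ Hl).
  apply (ccv_lbound _ _ _ Hl); [lra|]. intros n; apply qpoch_lb2; auto.
Qed.

Lemma qpoch_bb_lb b n : 0 < b < 1 -> (1 - b) ^ n <= Cmod (qpoch (RtoC b) b n).
Proof.
  intros Hb; induction n.
  - simpl. rewrite Cmod_1; lra.
  - simpl qpoch. simpl pow. rewrite Cmod_mult.
    rewrite <- RtoC_mult, <- RtoC_minus, Cmod_R.
    pose proof (pow_le_one b n ltac:(lra)). pose proof (pow_le b n ltac:(lra)).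
    rewrite Rabs_right by nra.
    pose proof (pow_le (1 - b) n ltac:(lra)).
    apply Rle_trans with (Cmod (qpoch (RtoC b) b n) * (1 - b)); [|apply Rmult_le_compat_l; [apply Cmod_ge_0|nra]].
    nra.
Qed.

Lemma Cmod_Cpow x n : Cmod (Cpow x n) = Cmod x ^ n.
Proof. induction n; simpl; [apply Cmod_1| rewrite Cmod_mult, IHn; reflexivity]. Qed.

Lemma pow_decr q m n : 0 <= q <= 1 -> (m <= n)%nat -> q ^ n <= q ^ m.
Proof.
  intros Hq Hmn. replace n with (m + (n - m))%nat by lia. rewrite pow_add.
  pose proof (pow_le_one q (n - m) Hq). pose proof (pow_le q m (proj1 Hq)). nra.
Qed.

Lemma abs_conv q (hq0 : 0 < q) (hq1 : q < 1) (c : nat -> C) M : 0 <= M ->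
  (forall k, Cmod (c k) <= M * (q ^ (k * (k + 1)) / (1 - q ^ 2) ^ k)) ->
  forall x, ex_series (fun k => Cmod (Cmult (c k) (Cpow x (2 * k)))).
Proof.
  intros HM Hc x.
  set (b := q ^ 2). assert (Hb : 0 < b < 1) by (unfold b; split; nra).
  set (r := Cmod x ^ 2 / (1 - b)).
  assert (Hr : 0 <= r) by (unfold r; apply Rmult_le_pos; [apply pow_le, Cmod_ge_0|left; apply Rinv_0_lt_compat; lra]).
  assert (Hterm : forall k, Cmod (Cmult (c k) (Cpow x (2 * k))) <= M * (q ^ (k + 1) * r) ^ k).
  { intros k. rewrite Cmod_mult, Cmod_Cpow, (pow_mult (Cmod x) 2 k).
    replace ((q ^ (k + 1) * r) ^ k) with (q ^ (k * (k + 1)) / (1 - b) ^ k * (Cmod x ^ 2) ^ k).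
    - rewrite <- Rmult_assoc. apply Rmult_le_compat_r; [apply pow_le, pow_le, Cmod_ge_0|]. apply Hc.
    - unfold r, Rdiv. rewrite !Rpow_mult_distr, pow_inv, (Nat.mul_comm k (k + 1)), (pow_mult q (k + 1) k). ring. }
  assert (Hq : Rabs q < 1) by (rewrite Rabs_right; lra).
  destruct (pow_lt_1_zero q Hq (/ (2 * (r + 1))) ltac:(apply Rinv_0_lt_compat; lra)) as [K HK].
  specialize (HK K (le_n K)). rewrite Rabs_right in HK by (apply Rle_ge, pow_le; lra).
  assert (HK2 : q ^ K * r <= 1/2).
  { assert (q ^ K * (2 * (r + 1)) < 1).
    { apply Rmult_lt_reg_r with (/ (2 * (r + 1))); [apply Rinv_0_lt_compat; lra|].
      rewrite Rmult_assoc, Rinv_r by lra. lra. }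
    pose proof (pow_le q K ltac:(lra)). nra. }
  apply (ex_series_incr_n _ K).
  apply (ex_series_le (fun k => Cmod (Cmult (c (K + k)%nat) (Cpow x (2 * (K + k))))) (fun k => M * (1/2) ^ k)).
  - intros k. change (Rabs (Cmod (Cmult (c (K + k)%nat) (Cpow x (2 * (K + k))))) <= M * (1 / 2) ^ k).
    rewrite Rabs_right by (apply Rle_ge, Cmod_ge_0).
    eapply Rle_trans; [apply Hterm|]. apply Rmult_le_compat_l; [lra|].
    apply Rle_trans with ((1/2) ^ (K + k)).
    + apply pow_incr. split.
      * apply Rmult_le_pos; [apply pow_le; lra|lra].
      * pose proof (pow_decr q K (K + k + 1) ltac:(lra) ltac:(lia)). nra.
    + apply pow_decr; [lra|lia].
  - apply (ex_series_scal_l M (fun k => (1/2) ^ k)). apply ex_series_geom. rewrite Rabs_right; lra.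
Qed.

Lemma Cpow_mult a c n : Cpow (Cmult a c) n = Cmult (Cpow a n) (Cpow c n).
Proof. induction n; simpl; [ring| rewrite IHn; ring]. Qed.

Lemma Cpow_R r n : Cpow (RtoC r) n = RtoC (r ^ n).
Proof. induction n; simpl; [reflexivity| rewrite IHn, RtoC_mult; reflexivity]. Qed.

Lemma Cpow_qx q x k : Cpow (Cmult (RtoC q) x) (2 * k) = Cmult (RtoC ((q ^ 2) ^ k)) (Cpow x (2 * k)).
Proof. rewrite Cpow_mult, Cpow_R, pow_mult. reflexivity. Qed.

Lemma Cpow_SS x k : Cpow x (2 * S k) = Cmult (Cmult x x) (Cpow x (2 * k)).
Proof. replace (2 * S k)%nat with (S (S (2 * k))) by lia. simpl. ring. Qed.

Lemma Cpow_add x m n : Cpow x (m + n) = Cmult (Cpow x m) (Cpow x n).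
Proof. induction m; simpl; [ring| rewrite IHm; ring]. Qed.

Lemma cexp_shift z r : cexp (Cplus z (RtoC r)) = Cmult (cexp z) (RtoC (exp r)).
Proof.
  unfold cexp, Cplus, Cmult, RtoC, Re, Im; simpl. rewrite Rplus_0_r, exp_plus. f_equal; ring.
Qed.

Lemma cexp_nz z : cexp z <> RtoC 0.
Proof.
  unfold cexp, RtoC. intros H. injection H as H1 H2.
  pose proof (exp_pos (Re z)). pose proof (sin2_cos2 (Im z)).
  assert (cos (Im z) = 0) by (apply Rmult_eq_reg_l with (exp (Re z)); lra).
  assert (sin (Im z) = 0) by (apply Rmult_eq_reg_l with (exp (Re z)); lra).
  unfold Rsqr in H0. rewrite H3, H4 in H0. lra.
Qed.

Lemma Cmult_eq0 a b : a <> RtoC 0 -> Cmult a b = RtoC 0 -> b = RtoC 0.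
Proof.
  intros Ha H. replace b with (Cmult (Cinv a) (Cmult a b)) by (field; exact Ha).
  rewrite H. ring.
Qed.

Lemma exp_ln_pow q n : 0 < q -> exp (INR n * ln q) = q ^ n.
Proof.
  intros Hq. rewrite <- Rpower_pow by exact Hq. reflexivity.
Qed.

Section Main.
Variable q : R.
Hypothesis hq0 : 0 < q.
Hypothesis hq1 : q < 1.
Variable nu : C.

Let b := q ^ 2.
Lemma hb : 0 < b < 1.
Proof. unfold b. split; nra. Qed.

Definition AA := cexp (Cmult (Cplus (Cmult (RtoC 2) nu) (RtoC 2)) (RtoC (ln q))).
Definition ss k := Cdiv (RtoC ((-1) ^ k * q ^ (k * (k + 1)))) (qpoch (RtoC (q ^ 2)) (q ^ 2) k).
Definition fc k := Cmult (ss k) (qpoch_inf (Cmult AA (RtoC ((q ^ 2) ^ k))) (q ^ 2)).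
Definition gc k := Cmult (ss k) (qpoch_inf (Cmult AA (RtoC ((q ^ 2) ^ S k))) (q ^ 2)).
Definition FF x := cseries (fun k => Cmult (fc k) (Cpow x (2 * k))).
Definition GG x := cseries (fun k => Cmult (gc k) (Cpow x (2 * k))).

Lemma exp_nu k :
  cexp (Cmult (Cplus (Cmult (RtoC 2) nu) (RtoC (INR (2 * k + 2)))) (RtoC (ln q)))
  = Cmult AA (RtoC ((q ^ 2) ^ k)).
Proof.
  replace (Cmult (Cplus (Cmult (RtoC 2) nu) (RtoC (INR (2 * k + 2)))) (RtoC (ln q)))
    with (Cplus (Cmult (Cplus (Cmult (RtoC 2) nu) (RtoC 2)) (RtoC (ln q))) (RtoC (INR (2 * k) * ln q))).
  - rewrite cexp_shift, exp_ln_pow, <- pow_mult by exact hq0. reflexivity.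
  - rewrite plus_INR. replace (INR 2) with 2 by (simpl; ring). rewrite RtoC_plus, RtoC_mult. ring.
Qed.

Lemma exp_nu1 k :
  cexp (Cmult (Cplus (Cmult (RtoC 2) (Cplus nu (RtoC 1))) (RtoC (INR (2 * k + 2)))) (RtoC (ln q)))
  = Cmult AA (RtoC ((q ^ 2) ^ S k)).
Proof.
  replace (Cmult (Cplus (Cmult (RtoC 2) (Cplus nu (RtoC 1))) (RtoC (INR (2 * k + 2)))) (RtoC (ln q)))
    with (Cplus (Cmult (Cplus (Cmult (RtoC 2) nu) (RtoC 2)) (RtoC (ln q))) (RtoC (INR (2 * S k) * ln q))).
  - rewrite cexp_shift, exp_ln_pow, <- pow_mult by exact hq0. reflexivity.
  - replace (2 * S k)%nat with (2 * k + 2)%nat by lia.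
    rewrite plus_INR. replace (INR 2) with 2 by (simpl; ring). rewrite RtoC_mult, !RtoC_plus. ring.
Qed.

Lemma J_nu x : hahn_exton_J q nu x =
  Cmult (Cdiv (cpow x nu) (qpoch_inf (RtoC (q ^ 2)) (q ^ 2))) (FF x).
Proof.
  unfold hahn_exton_J, FF. f_equal. f_equal. apply functional_extensionality; intros k.
  rewrite exp_nu. unfold fc, ss, Cdiv. ring.
Qed.

Lemma J_nu1 x : hahn_exton_J q (Cplus nu (RtoC 1)) x =
  Cmult (Cdiv (cpow x (Cplus nu (RtoC 1))) (qpoch_inf (RtoC (q ^ 2)) (q ^ 2))) (GG x).
Proof.
  unfold hahn_exton_J, GG. f_equal. f_equal. apply functional_extensionality; intros k.
  rewrite exp_nu1. unfold gc, ss, Cdiv. ring.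
Qed.

Lemma Cdiv_nz a c : a <> RtoC 0 -> c <> RtoC 0 -> Cdiv a c <> RtoC 0.
Proof.
  intros Ha Hc H. apply Cmod_gt_0 in Ha. apply Cmod_gt_0 in Hc.
  assert (Cmod (Cdiv a c) = 0) by (rewrite H; apply Cmod_0).
  rewrite Cmod_div in H0 by (intro E; rewrite E, Cmod_0 in Hc; lra).
  unfold Rdiv in H0. apply Rmult_integral in H0. destruct H0; [lra|].
  pose proof (Rinv_0_lt_compat _ Hc). lra.
Qed.

Lemma qbb_nz : qpoch_inf (RtoC (q ^ 2)) (q ^ 2) <> RtoC 0.
Proof.
  pose proof hb as Hb. fold b.
  assert (Hab : Rabs b < 1) by (rewrite Rabs_right; lra).
  destruct (pow_lt_1_zero b Hab ((1 - b) / 2) ltac:(lra)) as [N HN].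
  specialize (HN (S N) ltac:(lia)). rewrite Rabs_right in HN by (apply Rle_ge, pow_le; lra).
  rewrite (qpinf_iter _ _ N) by lra.
  intros H. apply (f_equal Cmod) in H. rewrite Cmod_mult, Cmod_0 in H.
  pose proof (qpoch_bb_lb b N Hb). pose proof (pow_lt (1 - b) N ltac:(lra)).
  assert (1/2 <= Cmod (qpoch_inf (Cmult (RtoC b) (RtoC (b ^ N))) b)).
  { apply qpinf_lb; [lra|]. rewrite <- RtoC_mult, Cmod_R, Rabs_right; simpl in HN; [lra|].
    apply Rle_ge; apply Rmult_le_pos; [lra|apply pow_le; lra]. }
  nra.
Qed.

Lemma pref_nz x nu' : cpow x nu' <> RtoC 0 ->
  Cdiv (cpow x nu') (qpoch_inf (RtoC (q ^ 2)) (q ^ 2)) <> RtoC 0.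
Proof. intros H; apply Cdiv_nz; [exact H| exact qbb_nz]. Qed.

Lemma ss_bound k : Cmod (ss k) <= q ^ (k * (k + 1)) / (1 - b) ^ k.
Proof.
  pose proof hb as Hb. unfold ss. fold b.
  pose proof (qpoch_bb_lb b k Hb). pose proof (pow_lt (1 - b) k ltac:(lra)).
  assert (qpoch (RtoC b) b k <> RtoC 0) by (intro E; rewrite E, Cmod_0 in H; lra).
  rewrite Cmod_div by exact H1. rewrite Cmod_R, Rabs_mult, pow_1_abs, Rmult_1_l.
  rewrite Rabs_right by (apply Rle_ge, pow_le; lra).
  unfold Rdiv. apply Rmult_le_compat_l; [apply pow_le; lra|].
  apply Rinv_le_contravar; lra.
Qed.

Definition MM := exp (Cmod AA / (1 - b)).

Lemma qpinf_AA_bound k : Cmod (qpoch_inf (Cmult AA (RtoC (b ^ k))) b) <= MM.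
Proof.
  pose proof hb as Hb. eapply Rle_trans; [apply qpinf_ub; lra|]. apply exp_mono.
  rewrite Cmod_ab by lra. unfold Rdiv. apply Rmult_le_compat_r; [left; apply Rinv_0_lt_compat; lra|].
  pose proof (Cmod_ge_0 AA). pose proof (pow_le_one b k ltac:(lra)). pose proof (pow_le b k ltac:(lra)). nra.
Qed.

Lemma fc_bound k : Cmod (fc k) <= MM * (q ^ (k * (k + 1)) / (1 - b) ^ k).
Proof.
  unfold fc. rewrite Cmod_mult, Rmult_comm. fold b.
  apply Rmult_le_compat; [apply Cmod_ge_0|apply Cmod_ge_0|apply qpinf_AA_bound|apply ss_bound].
Qed.

Lemma gc_bound k : Cmod (gc k) <= MM * (q ^ (k * (k + 1)) / (1 - b) ^ k).
Proof.
  unfold gc. rewrite Cmod_mult, Rmult_comm. fold b.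
  apply Rmult_le_compat; [apply Cmod_ge_0|apply Cmod_ge_0|apply qpinf_AA_bound|apply ss_bound].
Qed.


Definition Ft x k := Cmult (fc k) (Cpow x (2 * k)).
Definition Gt x k := Cmult (gc k) (Cpow x (2 * k)).

Lemma MM_pos : 0 <= MM.
Proof. left; apply exp_pos. Qed.

Lemma F_ser x : cser (Ft x) (FF x).
Proof. apply cser_abs. exact (abs_conv q hq0 hq1 fc MM MM_pos fc_bound x). Qed.

Lemma G_ser x : cser (Gt x) (GG x).
Proof. apply cser_abs. exact (abs_conv q hq0 hq1 gc MM MM_pos gc_bound x). Qed.

Lemma fc_gc k : fc k = Cmult (Cminus (RtoC 1) (Cmult AA (RtoC (b ^ k)))) (gc k).
Proof.
  pose proof hb as Hb. unfold fc, gc. fold b.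
  rewrite (qpinf_rec (Cmult AA (RtoC (b ^ k)))) by lra.
  replace (Cmult (Cmult AA (RtoC (b ^ k))) (RtoC b)) with (Cmult AA (RtoC (b ^ S k))).
  - ring.
  - simpl pow. rewrite RtoC_mult. ring.
Qed.

Lemma R1 x : FF x = Cplus (Cmult (RtoC 1) (GG x)) (Cmult (Copp AA) (GG (Cmult (RtoC q) x))).
Proof.
  change (cseries (Ft x) = Cplus (Cmult (RtoC 1) (GG x)) (Cmult (Copp AA) (GG (Cmult (RtoC q) x)))).
  apply cser_unique.
  apply (cser_ext (fun n => Cplus (Cmult (RtoC 1) (Gt x n)) (Cmult (Copp AA) (Gt (Cmult (RtoC q) x) n)))).
  - intros n. unfold Ft, Gt. rewrite fc_gc, Cpow_qx. fold b. ring.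
  - apply cser_lin; apply G_ser.
Qed.

Lemma ss_S k : Cmult (ss (S k)) (Cminus (RtoC 1) (RtoC (b ^ S k))) = Copp (Cmult (RtoC (b ^ S k)) (ss k)).
Proof.
  pose proof hb as Hb. unfold ss. fold b.
  pose proof (qpoch_bb_lb b k Hb). pose proof (pow_lt (1 - b) k ltac:(lra)).
  assert (HQ : qpoch (RtoC b) b k <> RtoC 0) by (intro E; rewrite E, Cmod_0 in H; lra).
  assert (HD : Cminus (RtoC 1) (RtoC (b ^ S k)) <> RtoC 0).
  { rewrite <- RtoC_minus. intro E. apply RtoC_inj in E.
    assert (b ^ S k < 1). { simpl. pose proof (pow_le_one b k ltac:(lra)). nra. } lra. }
  assert (E1 : (-1) ^ S k * q ^ (S k * (S k + 1)) = - (b ^ S k * ((-1) ^ k * q ^ (k * (k + 1))))).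
  { replace (S k * (S k + 1))%nat with (k * (k + 1) + 2 * S k)%nat by lia.
    rewrite pow_add, (pow_mult q 2 (S k)). fold b. simpl ((-1) ^ S k). ring. }
  change (qpoch (RtoC b) b (S k)) with (Cmult (qpoch (RtoC b) b k) (Cminus (RtoC 1) (Cmult (RtoC b) (RtoC (b ^ k))))).
  rewrite <- RtoC_mult. change (b * b ^ k) with (b ^ S k).
  rewrite E1. rewrite RtoC_opp, RtoC_mult. unfold Cdiv. field. split; assumption.
Qed.

Lemma R2 x : Cminus (FF x) (FF (Cmult (RtoC q) x)) =
  Cmult (Copp (Cmult (RtoC b) (Cmult x x))) (GG (Cmult (RtoC q) x)).
Proof.
  pose proof (cser_lin _ _ _ _ (RtoC 1) (Copp (RtoC 1)) (F_ser x) (F_ser (Cmult (RtoC q) x))) as H.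
  apply cser_S in H.
  pose proof (cser_lin _ _ _ _ (Copp (Cmult (RtoC b) (Cmult x x))) (RtoC 0)
     (G_ser (Cmult (RtoC q) x)) (G_ser (Cmult (RtoC q) x))) as H2.
  apply cser_unique in H. apply cser_unique in H2.
  replace (Cminus (FF x) (FF (Cmult (RtoC q) x))) with
    (Cminus (Cplus (Cmult (RtoC 1) (FF x)) (Cmult (Copp (RtoC 1)) (FF (Cmult (RtoC q) x))))
      (Cplus (Cmult (RtoC 1) (Ft x 0)) (Cmult (Copp (RtoC 1)) (Ft (Cmult (RtoC q) x) 0)))).
  2:{ unfold Ft. simpl. ring. }
  rewrite <- H.
  replace (Cmult (Copp (Cmult (RtoC b) (Cmult x x))) (GG (Cmult (RtoC q) x))) with
    (Cplus (Cmult (Copp (Cmult (RtoC b) (Cmult x x))) (GG (Cmult (RtoC q) x))) (Cmult (RtoC 0) (GG (Cmult (RtoC q) x)))) by ring.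
  rewrite <- H2. f_equal. apply functional_extensionality; intros k.
  unfold Ft, Gt. rewrite !Cpow_qx, !Cpow_SS. fold b.
  unfold fc, gc. fold b.
  set (P := qpoch_inf (Cmult AA (RtoC (b ^ S k))) b).
  set (X := Cpow x (2 * k)).
  pose proof (ss_S k) as E.
  transitivity (Cmult (Cmult (ss (S k)) (Cminus (RtoC 1) (RtoC (b ^ S k)))) (Cmult P (Cmult (Cmult x x) X))).
  - ring.
  - rewrite E. simpl pow. rewrite RtoC_mult. ring.
Qed.

Lemma AA_nz : AA <> RtoC 0.
Proof. apply cexp_nz. Qed.

Lemma propag x : FF x = RtoC 0 -> GG x = RtoC 0 ->
  FF (Cmult (RtoC q) x) = RtoC 0 /\ GG (Cmult (RtoC q) x) = RtoC 0.
Proof.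
  intros HF HG.
  pose proof (R1 x) as E1. rewrite HF, HG in E1.
  assert (HG' : GG (Cmult (RtoC q) x) = RtoC 0).
  { apply (Cmult_eq0 (Copp AA)).
    - intro E. apply AA_nz. replace AA with (Copp (Copp AA)) by ring. rewrite E. ring.
    - replace (Cmult (Copp AA) (GG (Cmult (RtoC q) x))) with
        (Cminus (Cplus (Cmult (RtoC 1) (RtoC 0)) (Cmult (Copp AA) (GG (Cmult (RtoC q) x)))) (RtoC 0)) by ring.
      rewrite <- E1. ring. }
  split; [|exact HG'].
  pose proof (R2 x) as E2. rewrite HF, HG' in E2.
  replace (FF (Cmult (RtoC q) x)) with (Copp (Cminus (RtoC 0) (FF (Cmult (RtoC q) x)))) by ring.
  rewrite E2. ring.
Qed.

Lemma propag_n x n : FF x = RtoC 0 -> GG x = RtoC 0 ->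
  FF (Cmult (RtoC (q ^ n)) x) = RtoC 0 /\ GG (Cmult (RtoC (q ^ n)) x) = RtoC 0.
Proof.
  intros HF HG. induction n.
  - simpl. replace (Cmult (RtoC 1) x) with x by ring. auto.
  - destruct IHn as [H1 H2]. destruct (propag _ H1 H2) as [H3 H4].
    replace (Cmult (RtoC (q ^ S n)) x) with (Cmult (RtoC q) (Cmult (RtoC (q ^ n)) x)).
    + auto.
    + simpl pow. rewrite RtoC_mult. ring.
Qed.

Lemma gc_shift_bound j k : Cmod (gc (j + k)) <= (MM / (1 - b) ^ j) * (q ^ (k * (k + 1)) / (1 - b) ^ k).
Proof.
  pose proof hb as Hb. eapply Rle_trans; [apply gc_bound|].
  pose proof (pow_lt (1 - b) j ltac:(lra)). pose proof (pow_lt (1 - b) k ltac:(lra)).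
  pose proof MM_pos.
  assert (q ^ ((j + k) * (j + k + 1)) <= q ^ (k * (k + 1))) by (apply pow_decr; [lra| nia]).
  rewrite pow_add. unfold Rdiv. rewrite Rinv_mult.
  pose proof (Rinv_0_lt_compat _ H). pose proof (Rinv_0_lt_compat _ H0).
  assert (0 <= q ^ ((j + k) * (j + k + 1))) by (apply pow_le; lra).
  assert (HE : MM * (q ^ ((j + k) * (j + k + 1)) * (/ (1 - b) ^ j * / (1 - b) ^ k)) =
          (MM * / (1 - b) ^ j) * (q ^ ((j + k) * (j + k + 1)) * / (1 - b) ^ k)) by ring.
  rewrite HE. apply Rmult_le_compat_l; [nra|]. apply Rmult_le_compat_r; lra.
Qed.

Definition hs j y k := Cmult (gc (j + k)) (Cpow y (2 * k)).

Lemma hs_conv j y : ex_series (fun k => Cmod (hs j y k)).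
Proof.
  pose proof hb as Hb. apply (abs_conv q hq0 hq1 (fun k => gc (j + k)) (MM / (1 - b) ^ j)).
  - pose proof MM_pos. pose proof (pow_lt (1 - b) j ltac:(lra)). apply Rmult_le_pos; [lra|left; apply Rinv_0_lt_compat; lra].
  - intros k; apply gc_shift_bound.
Qed.

Lemma Cpow_nz y n : y <> RtoC 0 -> Cpow y n <> RtoC 0.
Proof.
  intros Hy E. apply (f_equal Cmod) in E. rewrite Cmod_Cpow, Cmod_0 in E.
  apply Cmod_gt_0 in Hy. pose proof (pow_lt _ n Hy). lra.
Qed.

Lemma G_factor m y : (forall k, (k < m)%nat -> gc k = RtoC 0) ->
  GG y = Cmult (Cpow y (2 * m)) (cseries (hs m y)).
Proof.
  intros Hz.
  assert (Hsh : forall j, (j <= m)%nat -> cser (fun k => Gt y (j + k)) (GG y)).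
  { induction j; intros Hj.
    - apply (cser_ext (Gt y)); [intros; reflexivity| apply G_ser].
    - pose proof (cser_S _ _ (IHj ltac:(lia))) as H.
      assert (Gt y (j + 0) = RtoC 0) by (unfold Gt; rewrite Hz by lia; ring).
      cbv beta in H. rewrite H0 in H. replace (Cminus (GG y) (RtoC 0)) with (GG y) in H by ring.
      apply (cser_ext _ _ _ (fun k => f_equal (Gt y) (eq_sym (Nat.add_succ_comm j k)))) in H.
      exact H. }
  pose proof (Hsh m (le_n m)) as H1.
  pose proof (cser_lin _ _ _ _ (Cpow y (2 * m)) (RtoC 0) (cser_abs _ (hs_conv m y)) (cser_abs _ (hs_conv m y))) as H2.
  apply (cser_ext _ (fun k => Gt y (m + k))) in H2.
  - apply cser_unique in H1. apply cser_unique in H2. rewrite <- H1, H2. ring.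
  - intros k. unfold hs, Gt. replace (2 * (m + k))%nat with (2 * m + 2 * k)%nat by lia.
    rewrite Cpow_add. ring.
Qed.

Lemma gc_step m x0 : x0 <> RtoC 0 -> (forall n, GG (Cmult (RtoC (q ^ n)) x0) = RtoC 0) ->
  (forall k, (k < m)%nat -> gc k = RtoC 0) -> gc m = RtoC 0.
Proof.
  intros Hx0 HG Hz.
  set (T := Series (fun k => Cmod (hs (S m) (RtoC 1) k))).
  assert (HT : 0 <= T).
  { unfold T. replace 0 with (Series (fun k => 0 * Cmod (hs (S m) (RtoC 1) k))).
    - apply Series_le; [intros k; split; [lra| rewrite Rmult_0_l; apply Cmod_ge_0]| apply hs_conv].
    - rewrite Series_scal_l; ring. }
  assert (Key : forall y, y <> RtoC 0 -> Cmod y <= 1 -> GG y = RtoC 0 -> Cmod (gc m) <= 4 * (Cmod y ^ 2 * T)).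
  { intros y Hy Hy1 HGy.
    rewrite (G_factor m y Hz) in HGy.
    apply Cmult_eq0 in HGy; [|apply Cpow_nz; exact Hy].
    pose proof (cser_S _ _ (cser_abs _ (hs_conv m y))) as H.
    apply cser_unique in H. rewrite HGy in H.
    assert (E0 : hs m y 0 = gc m) by (unfold hs; rewrite Nat.add_0_r; simpl; ring).
    rewrite E0 in H.
    assert (Hex : ex_series (fun k => Cmod (hs m y (S k)))) by (apply (ex_series_incr_1 (fun k => Cmod (hs m y k))); apply hs_conv).
    pose proof (cseries_bound _ Hex) as HB. rewrite H in HB.
    replace (Cminus (RtoC 0) (gc m)) with (Copp (gc m)) in HB by ring. rewrite Cmod_opp in HB.
    eapply Rle_trans; [exact HB|]. apply Rmult_le_compat_l; [lra|].
    unfold T. rewrite <- Series_scal_l.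
    apply Series_le.
    - intros k. split; [apply Cmod_ge_0|].
      unfold hs. rewrite !Cmod_mult, !Cmod_Cpow, Cmod_1, pow1.
      replace (m + S k)%nat with (S m + k)%nat by lia.
      replace (2 * S k)%nat with (2 + 2 * k)%nat by lia. rewrite pow_add.
      pose proof (Cmod_ge_0 (gc (S m + k))). pose proof (Cmod_ge_0 y).
      pose proof (pow_le (Cmod y) (2 * k) H1). pose proof (pow_le_one (Cmod y) (2 * k) ltac:(lra)).
      pose proof (pow_le (Cmod y) 2 H1). assert (0 <= Cmod (gc (S m + k)) * Cmod y ^ 2) by nra. nra.
    - apply (ex_series_scal_l (Cmod y ^ 2) (fun k => Cmod (hs (S m) (RtoC 1) k))). apply hs_conv. }
  destruct (Ceq_dec (gc m) (RtoC 0)) as [E|Hne]; [exact E|exfalso].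
  set (c := Cmod (gc m)). assert (Hc : 0 < c) by (apply Cmod_gt_0; exact Hne).
  pose proof (Cmod_gt_0 x0) as [Hm0 _]. specialize (Hm0 Hx0).
  set (d := Rmin 1 (c / (4 * T + 1))).
  assert (Hd : 0 < d) by (unfold d; apply Rmin_pos; [lra| apply Rdiv_lt_0_compat; lra]).
  assert (Hq : Rabs q < 1) by (rewrite Rabs_right; lra).
  destruct (pow_lt_1_zero q Hq (d / (Cmod x0 + 1)) ltac:(apply Rdiv_lt_0_compat; lra)) as [n Hn].
  specialize (Hn n (le_n n)). rewrite Rabs_right in Hn by (apply Rle_ge, pow_le; lra).
  set (t := q ^ n * Cmod x0).
  assert (Ht0 : 0 <= t) by (unfold t; apply Rmult_le_pos; [apply pow_le; lra| lra]).
  assert (Htd : t < d).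
  { assert (E : d / (Cmod x0 + 1) * (Cmod x0 + 1) = d) by (field; lra).
    pose proof (Rmult_lt_compat_r (Cmod x0 + 1) _ _ ltac:(lra) Hn) as Hn2. rewrite E in Hn2.
    unfold t. pose proof (pow_le q n ltac:(lra)). nra. }
  assert (Hd1 : d <= 1) by apply Rmin_l.
  assert (Hd2 : d <= c / (4 * T + 1)) by apply Rmin_r.
  assert (Hy : Cmod (Cmult (RtoC (q ^ n)) x0) = t).
  { rewrite Cmod_mult, Cmod_R, Rabs_right; [reflexivity| apply Rle_ge, pow_le; lra]. }
  assert (Hyne : Cmult (RtoC (q ^ n)) x0 <> RtoC 0) by (apply Cmod_gt_0; rewrite Hy; unfold t; pose proof (pow_lt q n hq0); nra).
  pose proof (Key _ Hyne ltac:(rewrite Hy; lra) (HG n)) as K. rewrite Hy in K. fold c in K.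
  assert (t * (4 * T + 1) < c).
  { apply Rlt_le_trans with (d * (4 * T + 1)); [apply Rmult_lt_compat_r; lra|].
    apply Rmult_le_reg_r with (/ (4 * T + 1)); [apply Rinv_0_lt_compat; lra|].
    rewrite Rmult_assoc, Rinv_r by lra. lra. }
  assert (t ^ 2 <= t) by (simpl; nra).
  nra.
Qed.

Lemma gc_all_zero x0 : x0 <> RtoC 0 -> (forall n, GG (Cmult (RtoC (q ^ n)) x0) = RtoC 0) ->
  forall m, gc m = RtoC 0.
Proof.
  intros Hx0 HG.
  assert (forall m k, (k < m)%nat -> gc k = RtoC 0).
  { induction m; intros k Hk; [lia|].
    destruct (Nat.eq_dec k m) as [->|Hne].
    - apply (gc_step m x0 Hx0 HG IHm).
    - apply IHm; lia. }
  intros m; apply (H (S m)); lia.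
Qed.

Lemma gc_some_nz : exists K, gc K <> RtoC 0.
Proof.
  pose proof hb as Hb.
  assert (Hab : Rabs b < 1) by (rewrite Rabs_right; lra).
  pose proof (Cmod_ge_0 AA).
  destruct (pow_lt_1_zero b Hab ((1 - b) / 2 / (Cmod AA + 1)) ltac:(apply Rdiv_lt_0_compat; lra)) as [K HK].
  specialize (HK (S K) ltac:(lia)). rewrite Rabs_right in HK by (apply Rle_ge, pow_le; lra).
  exists K. unfold gc. fold b. intro E. apply (f_equal Cmod) in E. rewrite Cmod_mult, Cmod_0 in E.
  assert (H1 : 1/2 <= Cmod (qpoch_inf (Cmult AA (RtoC (b ^ S K))) b)).
  { apply qpinf_lb; [lra|]. rewrite Cmod_ab by lra.
    assert (b ^ S K * (Cmod AA + 1) < (1 - b) / 2).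
    { apply Rmult_lt_reg_r with (/ (Cmod AA + 1)); [apply Rinv_0_lt_compat; lra|].
      rewrite Rmult_assoc, Rinv_r by lra. lra. }
    pose proof (pow_le b (S K) ltac:(lra)). nra. }
  assert (H2 : 0 < Cmod (ss K)).
  { apply Cmod_gt_0. unfold ss. apply Cdiv_nz.
    - intro E2. apply RtoC_inj in E2. apply Rmult_integral in E2. destruct E2 as [E2|E2].
      + apply (pow_nonzero (-1) K); [lra|exact E2].
      + apply (pow_nonzero q (K * (K + 1))); [lra|exact E2].
    - intro E2. pose proof (qpoch_bb_lb b K Hb). pose proof (pow_lt (1 - b) K ltac:(lra)).
      fold b in E2. rewrite E2, Cmod_0 in H0. lra. }
  nra.
Qed.

End Main.

Theorem proposition3p8 (q : R) (hq0 : 0 < q) (hq1 : q < 1) (nu : C) :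
  ~ (exists x : C, x <> RtoC 0 /\
       hahn_exton_J q nu x = RtoC 0 /\
       hahn_exton_J q (Cplus nu (RtoC 1)) x = RtoC 0).
Proof.
  intros [x [Hx [H1 H2]]].
  rewrite J_nu in H1. rewrite J_nu1 in H2.
  apply Cmult_eq0 in H1; [|apply pref_nz; auto; unfold cpow; apply cexp_nz].
  apply Cmult_eq0 in H2; [|apply pref_nz; auto; unfold cpow; apply cexp_nz].
  assert (HG : forall n, GG q nu (Cmult (RtoC (q ^ n)) x) = RtoC 0).
  { intros n. apply (propag_n q hq0 hq1 nu x n H1 H2). }
  pose proof (gc_all_zero q hq0 hq1 nu x Hx HG) as Z.
  destruct (gc_some_nz q hq0 hq1 nu) as [K HK]. apply HK, Z. all: exact hq0.
Qed.
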